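(* Let $p$ be an odd prime and $k\in\mathbb{N}$. Then $\mathcal{P}_e(H_3(\mathbb{Z}/p^k\mathbb{Z}))=\Delta_D(H_3(\mathbb{Z}/p^k\mathbb{Z}))$ if and only if $k=1$.
   Context: $H_3(\mathbb{Z}/p^k\mathbb{Z})=\langle y_1,y_2,w\mid [y_1,y_2]=w,\ y_1^{p^k}=y_2^{p^k}=w^{p^k}=[y_1,w]=[y_2,w]=e\rangle$ for an odd prime $p$, with $[x,y]=x^{-1}y^{-1}xy$. The enhanced power graph $\mathcal{P}_e(G)$ has vertex set $G$ with distinct $x,y$ adjacent iff $\langle x,y\rangle$ is cyclic. The deep commuting graph $\Delta_D(G)$ has vertex set $G$, distinct vertices adjacent iff their preimages commute in a Schur cover $\tilde G$ of $G$ (a central extension $\{e\}\to M(G)\to\tilde G\to G\to\{e\}$ with kernel contained in $Z(\tilde G)\cap[\tilde G,\tilde G]$, of maximal order; $M(G)$ the Schur multiplier). *)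

(* Defs.v *)
From HB Require Import structures.
From mathcomp Require Import all_boot all_order all_algebra all_fingroup all_solvable.
Set Implicit Arguments. Unset Strict Implicit. Unset Printing Implicit Defensive.
Import GRing.Theory.
Local Open Scope group_scope.

(* H_3(Z/mZ): upper unitriangular 3x3 matrices over 'Z_m, as a subset of GL_3('Z_m).
   With y1 = I + E_12, y2 = I + E_23, w = I + E_13 this is the presented group. *)
Definition heis (m : nat) : {set {'GL_3['Z_m]}} :=
  [set u : {'GL_3['Z_m]} | [forall i : 'I_3, forall j : 'I_3,
     (i < j)%N || (GLval u i j == (if i == j then 1%R else 0%R))]].

Definition epg_adj (gT : finGroupType) (x y : gT) : bool :=
  (x != y) && cyclic <<[set x; y]>>.

Definition stem_ext (gT rT : finGroupType) (G : {set gT}) (K : {group rT})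
    (f : {morphism K >-> gT}) : bool :=
  (f @* K == G) && ('ker f \subset 'Z(K) :&: K^`(1)).
Arguments stem_ext {gT rT} G {K} f.

Definition schur_cover (gT rT : finGroupType) (G : {set gT}) (K : {group rT})
    (f : {morphism K >-> gT}) : Prop :=
  stem_ext G f /\
  forall (sT : finGroupType) (L : {group sT}) (g : {morphism L >-> gT}),
    stem_ext G g -> #|L| <= #|K|.
Arguments schur_cover {gT rT} G {K} f.

(* Deep commuting graph adjacency w.r.t. the Schur cover f : K ->> G:
   distinct, and some (equivalently, all, as ker f is central) preimages commute. *)
Definition dcg_adj (gT rT : finGroupType) (K : {group rT})
    (f : {morphism K >-> gT}) (x y : gT) : Prop :=
  x != y /\ exists x' y', [/\ x' \in K, y' \in K, f x' = x, f y' = y & commute x' y'].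

(* Main.v *)
From HB Require Import structures.
Require Import Defs.
From mathcomp Require Import all_boot all_order all_algebra all_fingroup all_solvable.
From mathcomp Require Import ring zify.
Set Implicit Arguments. Unset Strict Implicit. Unset Printing Implicit Defensive.
Import GRing.Theory.

Section ZE.
Variable m : nat.
Local Open Scope ring_scope.

Definition Emx (a b c : 'Z_m) : 'M['Z_m]_3 :=
  \matrix_(i, j) (if i == j then 1 else
     if ((i:nat) == 0%N) && ((j:nat) == 1%N) then a else
     if ((i:nat) == 1%N) && ((j:nat) == 2%N) then b else
     if ((i:nat) == 0%N) && ((j:nat) == 2%N) then c else 0).

Lemma EmxM a b c a' b' c' :
  Emx a b c *m Emx a' b' c' = Emx (a + a') (b + b') (c + c' + a * b').
Proof.
apply/matrixP => i j; rewrite !mxE !big_ord_recr big_ord0 /= !mxE.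
case: i => [[|[|[|i]]] Hi] //; case: j => [[|[|[|j]]] Hj] //=; ring.
Qed.

Lemma Emx1 : Emx 0 0 0 = 1%:M.
Proof.
apply/matrixP => i j; rewrite !mxE.
by case: i => [[|[|[|i]]] Hi] //; case: j => [[|[|[|j]]] Hj].
Qed.

Lemma Emx_unit a b c : Emx a b c \in unitmx.
Proof.
have H : Emx a b c *m Emx (-a) (-b) (a * b - c) = 1%:M.
  by rewrite EmxM -Emx1; congr Emx; ring.
by case: (mulmx1_unit H).
Qed.

Definition i0 : 'I_3 := @Ordinal 3 0 isT.
Definition i1 : 'I_3 := @Ordinal 3 1 isT.
Definition i2 : 'I_3 := @Ordinal 3 2 isT.

Definition ZE a b c : {'GL_3['Z_m]} := FinRing.Unit (Emx_unit a b c).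

Lemma ZE_val a b c : GLval (ZE a b c) = Emx a b c.
Proof. by []. Qed.

Lemma ZE_mul a b c a' b' c' :
  (ZE a b c * ZE a' b' c')%g = ZE (a + a') (b + b') (c + c' + a * b').
Proof. by apply: val_inj; rewrite /= -EmxM. Qed.

Lemma ZE1 : ZE 0 0 0 = 1%g.
Proof. by apply: val_inj; rewrite /= Emx1. Qed.

Lemma ZE_inj a b c a' b' c' : ZE a b c = ZE a' b' c' -> [/\ a = a', b = b' & c = c'].
Proof.
move=> H.
have E : forall i j, Emx a b c i j = Emx a' b' c' i j by move=> i j; rewrite -!ZE_val H.
have := E i0 i1; have := E i1 i2; have := E i0 i2; rewrite !mxE /=.
by move=> -> -> ->.
Qed.

Lemma ZE_heis a b c : ZE a b c \in heis m.
Proof.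
rewrite inE; apply/forallP => i; apply/forallP => j; rewrite ZE_val mxE.
by case: i => [[|[|[|i]]] Hi] //; case: j => [[|[|[|j]]] Hj].
Qed.

Lemma heis_ZE u : u \in heis m -> u = ZE (GLval u i0 i1) (GLval u i1 i2) (GLval u i0 i2).
Proof.
rewrite inE => /forallP H; apply: val_inj; apply/matrixP => i j.
have := H i => /forallP /(_ j); rewrite [in RHS]/= mxE.
case: i => [[|[|[|i]]] Hi] //; case: j => [[|[|[|j]]] Hj] //= => Hij;
  (try by move/eqP: Hij => ->); by congr (GLval u _ _); apply: val_inj.
Qed.


Lemma ZE_inv a b c : ((ZE a b c)^-1)%g = ZE (-a) (-b) (a * b - c).
Proof.
apply: (mulgI (ZE a b c)); rewrite mulgV ZE_mul -ZE1; congr ZE; ring.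
Qed.


Lemma ZE_exp a b c n :
  ((ZE a b c) ^+ n)%g = ZE (a * n%:R) (b * n%:R) (c * n%:R + a * b * ('C(n, 2))%:R).
Proof.
elim: n => [|n IH]; first by rewrite expg0 !mulr0 addr0 ZE1.
rewrite expgSr IH ZE_mul binS bin1; congr ZE; rewrite ?natrD ?natrS; ring.
Qed.

Lemma ZE_commg a b c a' b' c' :
  ([~ ZE a b c, ZE a' b' c'] = ZE 0 0 (a * b' - a' * b))%g.
Proof. rewrite /commg /conjg !ZE_inv !ZE_mul; congr ZE; ring. Qed.

Lemma ZE_commute a b c a' b' c' :
  commute (ZE a b c) (ZE a' b' c') <-> (a * b' = a' * b)%R.
Proof.
split => [/commgP|E]; first by rewrite ZE_commg -ZE1 => /eqP /ZE_inj [_ _ /eqP]; rewrite subr_eq0 => /eqP.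
by apply/commgP; rewrite ZE_commg E subrr ZE1 eqxx.
Qed.

End ZE.
Record T5 (m : nat) := MkT5 { t5v : 'Z_m * 'Z_m * 'Z_m * 'Z_m * 'Z_m }.

HB.instance Definition _ m := [isNew for @t5v m].
HB.instance Definition _ m := [Finite of T5 m by <:].

Section T5.
Variable m : nat.
Local Open Scope ring_scope.
Definition mk5 (x y z u v : 'Z_m) : T5 m := MkT5 (x, y, z, u, v).

Definition t5mul (P Q : T5 m) : T5 m :=
  let: MkT5 (x, y, z, u, v) := P in
  let: MkT5 (x', y', z', u', v') := Q in
  mk5 (x + x') (y + y') (z + z' + x * y') (u + u' + x * y' ^+ 2 + 2 * z * y')
      (v + v' + x * (x' * y' - z') + z * x').
Definition t5one : T5 m := mk5 0 0 0 0 0.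
Definition t5inv (P : T5 m) : T5 m :=
  let: MkT5 (x, y, z, u, v) := P in
  mk5 (- x) (- y) (x * y - z) (- u - x * y ^+ 2 + 2 * z * y) (- v).

Lemma t5mulA : associative t5mul.
Proof.
case=> [[[[[x y] z] u] v]] [[[[[x' y'] z'] u'] v']] [[[[[x'' y''] z''] u''] v'']].
rewrite /t5mul /mk5; congr (MkT5 (_, _, _, _, _)); ring.
Qed.
Lemma t5mul1 : left_id t5one t5mul.
Proof.
case=> [[[[[x y] z] u] v]]; rewrite /t5mul /mk5; congr (MkT5 (_, _, _, _, _)); ring.
Qed.
Lemma t5mulV : left_inverse t5one t5inv t5mul.
Proof.
case=> [[[[[x y] z] u] v]]; rewrite /t5mul /mk5; congr (MkT5 (_, _, _, _, _)); ring.
Qed.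
End T5.

HB.instance Definition _ m := Finite_isGroup.Build (T5 m) (@t5mulA m) (@t5mul1 m) (@t5mulV m).

Section T5b.
Variable m : nat.
Local Open Scope ring_scope.
Lemma mk5_mul x y z u v x' y' z' u' v' :
  (mk5 x y z u v * mk5 x' y' z' u' v' : T5 m)%g =
  mk5 (x + x') (y + y') (z + z' + x * y') (u + u' + x * y' ^+ 2 + 2 * z * y')
      (v + v' + x * (x' * y' - z') + z * x').
Proof. by []. Qed.
Lemma mk5_inv x y z u v :
  ((mk5 x y z u v : T5 m)^-1)%g = mk5 (- x) (- y) (x * y - z) (- u - x * y ^+ 2 + 2 * z * y) (- v).
Proof. by []. Qed.
Lemma mk5_one : (1%g : T5 m) = @mk5 m 0 0 0 0 0.
Proof. by []. Qed.
Lemma mk5_surj (P : T5 m) : exists x y z u v, P = mk5 x y z u v.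
Proof. by case: P => [[[[[x y] z] u] v]]; exists x, y, z, u, v. Qed.
Lemma mk5_inj (x y z u v x' y' z' u' v' : 'Z_m) : mk5 x y z u v = mk5 x' y' z' u' v' ->
  [/\ x = x', y = y', z = z', u = u' & v = v'].
Proof. by case. Qed.
End T5b.

Section Cover.
Variable m : nat.
Hypothesis m_gt1 : (1 < m)%N.
Hypothesis m_odd : odd m.
Local Open Scope group_scope.
Local Open Scope ring_scope.

Definition g0f (P : T5 m) : {'GL_3['Z_m]} := let: MkT5 (x, y, z, _, _) := P in ZE x y z.

Lemma g0M : {in [set: T5 m] &, {morph g0f : P Q / (P * Q)%g}}.
Proof.
move=> P Q _ _; case: P => [[[[[x y] z] u] v]]; case: Q => [[[[[x' y'] z'] u'] v']].
by rewrite /= ZE_mul.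
Qed.

Canonical g0 := Morphism g0M.

Lemma g0_mk5 x y z u v : g0 (mk5 x y z u v) = ZE x y z.
Proof. by []. Qed.

Lemma ker_g0 P : P \in 'ker g0 -> exists u v, P = mk5 0 0 0 u v.
Proof.
have [x [y [z [u [v ->]]]]] := mk5_surj P.
move/mker; rewrite g0_mk5 -ZE1 => /ZE_inj [-> -> ->].
by exists u, v.
Qed.

Lemma hh2 : 2 * (((m.+1)./2)%:R : 'Z_m) = 1.
Proof.
rewrite -natrM mul2n.
have : odd m.+1 = false by rewrite /= m_odd.
move/negbT/even_halfK => ->.
by rewrite -addn1 natrD pchar_Zp // add0r.
Qed.

Lemma g0_stem : stem_ext (heis m) g0.
Proof.
apply/andP; split.
  apply/eqP/setP => w; rewrite morphimEdom; apply/imsetP/idP.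
    by case=> P _ ->; have [x [y [z [u [v ->]]]]] := mk5_surj P; rewrite g0_mk5 ZE_heis.
  by move/heis_ZE => ->; exists (mk5 (GLval w i0 i1) (GLval w i1 i2) (GLval w i0 i2) 0 0).
apply/subsetP => P /ker_g0 [u [v ->]]; rewrite inE; apply/andP; split.
  apply/centerP; split => // Q _.
  have [x [y [z [u' [v' ->]]]]] := mk5_surj Q.
  rewrite /commute !mk5_mul; congr (mk5 _ _ _ _ _); ring.
set hh := (((m.+1)./2)%:R : 'Z_m).
have -> : mk5 0 0 0 u v =
   ([~ mk5 0 0 1%R 0 0, mk5 0 (hh * u)%R 0 0 0] * [~ mk5 0 0 1%R 0 0, mk5 (hh * v)%R 0 0 0 0])%g.
  rewrite /commg /conjg !mk5_inv !mk5_mul; congr (mk5 _ _ _ _ _); ring: hh2.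
by rewrite groupM //; apply: mem_commg.
Qed.

Lemma card_ker_g0 : (m * m <= #|'ker g0|)%N.
Proof.
pose F (uv : 'Z_m * 'Z_m) := mk5 0 0 0 uv.1 uv.2.
have Finj : injective F by move=> [u v] [u' v']; rewrite /F /= => /mk5_inj [_ _ _ -> ->].
have : F @: [set: 'Z_m * 'Z_m] \subset 'ker g0.
  apply/subsetP => P /imsetP [[u v] _ ->]; apply/kerP => //.
  by rewrite /F g0_mk5 ZE1.
move/subset_leq_card; rewrite card_imset // cardsT card_prod card_ord Zp_cast //.
Qed.

End Cover.

Section Gen.
Local Open Scope group_scope.
Variables (m : nat) (rT : finGroupType) (K : {group rT}).
Variable (f : {morphism K >-> {'GL_3['Z_m]}}).
Hypothesis fK : f @* K = heis m.
Hypothesis hZ : 'ker f \subset 'Z(K).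

Lemma lift u : u \in heis m -> exists2 u', u' \in K & f u' = u.
Proof. by rewrite -fK => /morphimP [u' Hu' _ ->]; exists u'. Qed.

Lemma ker_central c u : c \in 'ker f -> u \in K -> commute c u.
Proof. by move=> /(subsetP hZ) /centerP [_ H] /H. Qed.

Lemma in_ker u : u \in K -> f u = 1 -> u \in 'ker f.
Proof. by move=> Hu H; apply/kerP. Qed.

End Gen.

Section Counter.
Local Open Scope group_scope.
Variables (p k : nat) (rT : finGroupType) (K : {group rT}).
Hypothesis hp : prime p.
Hypothesis k2 : (2 <= k)%N.
Variable (f : {morphism K >-> {'GL_3['Z_(p ^ k)]}}).
Hypothesis fK : f @* K = heis (p ^ k).
Hypothesis hZ : 'ker f \subset 'Z(K).

Lemma counter : exists x y, [/\ x \in heis (p ^ k), y \in heis (p ^ k), ~~ epg_adj x y & dcg_adj f x y].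
Proof.
set m := (p ^ k)%N.
have p_gt1 : (1 < p)%N := prime_gt1 hp.
set n := (p ^ k.-1)%N.
have nm : (n * p)%N = m by rewrite /n /m -expnSr prednK // (leq_trans _ k2).
have n_gt0 : (0 < n)%N by rewrite expn_gt0 (ltnW p_gt1).
have n_lt : (n < m)%N by rewrite -nm ltn_Pmulr.
have m_gt1 : (1 < m)%N by apply: leq_ltn_trans n_lt.
have nR : ((n%:R : 'Z_m) != 0)%R.
  apply/eqP => /(congr1 (fun x : 'Z_m => x : nat)); rewrite val_Zp_nat // modn_small //= => /eqP.
  by move/eqP => E; rewrite E in n_gt0.
have mR : ((m%:R : 'Z_m) = 0)%R by rewrite pchar_Zp.
have [a0 Ha0 fa0] := lift fK (ZE_heis 1%R 0%R 0%R).
have [w0 Hw0 fw0] := lift fK (ZE_heis 0%R 0%R 1%R).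
exists (ZE n%:R 0 0)%R, (ZE 0 0 n%:R)%R; split; rewrite ?ZE_heis //.
  rewrite /epg_adj negb_and; apply/orP; right; apply/negP => Hcyc.
  have pR : (n%:R * p%:R = 0 :> 'Z_m)%R by rewrite -natrM nm mR.
  have Hx1 : (ZE (n%:R : 'Z_m) 0 0)%R ^+ p = 1.
    by rewrite ZE_exp -ZE1; congr ZE; ring: pR.
  have Hy1 : (ZE 0 0 (n%:R : 'Z_m))%R ^+ p = 1.
    by rewrite ZE_exp -ZE1; congr ZE; ring: pR.
  have Hxn : (ZE (n%:R : 'Z_m) 0 0)%R != 1.
    by rewrite -ZE1; apply/eqP => /ZE_inj [E _ _]; rewrite E eqxx in nR.
  have Hyn : (ZE 0 0 (n%:R : 'Z_m))%R != 1.
    by rewrite -ZE1; apply/eqP => /ZE_inj [_ _ E]; rewrite E eqxx in nR.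
  have ox := nt_prime_order hp Hx1 Hxn.
  have oy := nt_prime_order hp Hy1 Hyn.
  have Sx : <[(ZE (n%:R : 'Z_m) 0 0)%R]> \subset <<[set (ZE n%:R 0 0)%R; (ZE 0 0 n%:R)%R]>>.
    by rewrite cycle_subG mem_gen // !inE eqxx ?orbT.
  have Sy : <[(ZE 0 0 (n%:R : 'Z_m))%R]> \subset <<[set (ZE n%:R 0 0)%R; (ZE 0 0 n%:R)%R]>>.
    by rewrite cycle_subG mem_gen // !inE eqxx ?orbT.
  have := eq_subG_cyclic Hcyc Sx Sy.
  rewrite -/(order (ZE (n%:R : 'Z_m) 0 0)%R) -/(order (ZE 0 0 (n%:R : 'Z_m))%R) ox oy eqxx => /eqP Exy.
  have : (ZE 0 0 (n%:R : 'Z_m))%R \in <[(ZE (n%:R : 'Z_m) 0 0)%R]> by rewrite Exy cycle_id.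
  case/cycleP => i; rewrite ZE_exp => /ZE_inj [_ _].
  rewrite !mulr0 !mul0r addr0 => E; by rewrite E eqxx in nR.
have Hc : [~ a0, w0] \in 'ker f.
  apply: in_ker; first by rewrite groupR.
  by rewrite morphR // fa0 fw0 ZE_commg -ZE1; congr ZE; ring.
have ca : commute a0 [~ a0, w0] by apply/commute_sym/(ker_central hZ).
have cw : commute w0 [~ a0, w0] by apply/commute_sym/(ker_central hZ).
have cm : [~ a0, w0] ^+ m = 1.
  rewrite -commXg //; apply/eqP/commgP/(ker_central hZ) => //.
  apply: in_ker; rewrite ?groupX // morphX // fa0 ZE_exp -ZE1 mR; congr ZE; ring.
split.
  by apply/eqP => /ZE_inj [E _ _]; rewrite E eqxx in nR.
exists (a0 ^+ n), (w0 ^+ n); split; rewrite ?groupX //.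
- by rewrite morphX // fa0 ZE_exp; congr ZE; ring.
- by rewrite morphX // fw0 ZE_exp; congr ZE; ring.
apply/commgP; rewrite commXXg // -order_dvdn.
apply: dvdn_trans (_ : (m %| n * n)%N).
  by rewrite order_dvdn cm.
by rewrite /m /n -expnD dvdn_exp2l //; lia.
Qed.
End Counter.

Section Main.
Local Open Scope group_scope.
Variables (p : nat) (rT : finGroupType) (K : {group rT}).
Variable (f : {morphism K >-> {'GL_3['Z_p]}}).
Hypotheses (hp : prime p) (hodd : odd p) (fK : f @* K = heis p).
Hypothesis hker : 'ker f \subset 'Z(K) :&: K^`(1).
Hypothesis hbig : (p * p <= #|'ker f|)%N.
Variables (al be : rT).
Hypotheses (Hal : al \in K) (Hbe : be \in K).
Hypotheses (fal : f al = (ZE 1 0 0)%R) (fbe : f be = (ZE 0 1 0)%R).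

Local Notation ga := [~ al, be].

Lemma p_gt1 : (1 < p)%N. Proof. exact: prime_gt1. Qed.
Lemma hZ : 'ker f \subset 'Z(K). Proof. exact: subset_trans hker (subsetIl _ _). Qed.
Lemma pR : (p%:R = 0 :> 'Z_p)%R. Proof. exact: pchar_Zp p_gt1. Qed.
Lemma CR : ('C(p, 2)%:R = 0 :> 'Z_p)%R.
Proof. by rewrite bin2odd // natrM pR mul0r. Qed.

Lemma ZEp (a b c : 'Z_p) : (ZE a b c) ^+ p = 1.
Proof. rewrite ZE_exp -ZE1; congr ZE; ring: pR CR. Qed.

Lemma fheis u : u \in K -> f u \in heis p.
Proof. by move=> Hu; rewrite -fK mem_morphim. Qed.

Lemma Kp u : u \in K -> u ^+ p \in 'ker f.
Proof.
move=> Hu; apply: in_ker; rewrite ?groupX // morphX //.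
by rewrite (heis_ZE (fheis Hu)) ZEp.
Qed.

Lemma kerC c u : c \in 'ker f -> u \in K -> commute c u.
Proof. by move=> /(subsetP hZ) /centerP [_ H] /H. Qed.

Lemma Hga : ga \in K. Proof. by rewrite groupR. Qed.
Lemma fga : f ga = (ZE 0 0 1)%R.
Proof. by rewrite morphR // fal fbe ZE_commg; congr ZE; ring. Qed.

Lemma psi_ker u : u \in K -> [~ u, ga] \in 'ker f.
Proof.
move=> Hu; apply: in_ker; first by rewrite groupR ?Hga.
rewrite morphR ?Hga // fga (heis_ZE (fheis Hu)) ZE_commg -ZE1; congr ZE; ring.
Qed.

Lemma psi_C u v : u \in K -> v \in K -> commute [~ u, ga] v.
Proof. by move=> Hu Hv; apply: kerC (psi_ker Hu) Hv. Qed.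

Lemma psiM u v : u \in K -> v \in K -> [~ u * v, ga] = [~ u, ga] * [~ v, ga].
Proof.
by move=> Hu Hv; rewrite commMgJ; congr (_ * _); apply/conjg_fixP/commgP/psi_C.
Qed.

Lemma psiX u n : u \in K -> [~ u ^+ n, ga] = [~ u, ga] ^+ n.
Proof. by move=> Hu; rewrite commXg //; apply/commute_sym/psi_C. Qed.

Lemma psi_ker1 c : c \in 'ker f -> [~ c, ga] = 1.
Proof. by move=> Hc; apply/eqP/commgP/kerC => //; apply: Hga. Qed.

Lemma psi_ga n : [~ ga ^+ n, ga] = 1.
Proof. by apply/eqP/commgP/commute_sym/commuteX. Qed.

Lemma decomp u : u \in K -> exists c k, k \in 'ker f /\
  u = al ^+ (GLval (f u) i0 i1) * be ^+ (GLval (f u) i1 i2) * ga ^+ c * k.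
Proof.
move=> Hu.
set a := GLval (f u) i0 i1; set b := GLval (f u) i1 i2; set c0 := GLval (f u) i0 i2.
have Efu : f u = ZE a b c0 := heis_ZE (fheis Hu).
pose c := nat_of_ord (c0 - a * b)%R.
pose l := al ^+ a * be ^+ b * ga ^+ c.
have Hl : l \in K by rewrite !groupM ?groupX ?Hga.
have fl : f l = f u.
  rewrite !morphM ?groupM ?groupX ?Hga // !morphX ?Hga // fal fbe fga !ZE_exp !ZE_mul Efu.
  by congr ZE; rewrite /c !natr_Zp; ring.
exists c, (l^-1 * u); split; last by rewrite mulKVg.
by apply: in_ker; rewrite ?groupM ?groupV // morphM ?groupV // morphV // fl mulVg.
Qed.

Lemma psi_decomp u : u \in K ->
  [~ u, ga] = [~ al, ga] ^+ (GLval (f u) i0 i1) * [~ be, ga] ^+ (GLval (f u) i1 i2).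
Proof.
move=> Hu; have [c [k [Hk Eu]]] := decomp Hu.
have Hk' : k \in K := dom_ker Hk.
by rewrite [in LHS]Eu !psiM ?groupM ?groupX ?Hga // !psiX ?Hga // commgg expg1n (psi_ker1 Hk) !mulg1.
Qed.

Lemma ga_p : ga ^+ p = 1.
Proof.
have Hc : [~ ga, al] \in 'ker f.
  apply: in_ker; first by rewrite groupR ?Hga.
  by rewrite morphR ?Hga // fga fal ZE_commg -ZE1; congr ZE; ring.
have c1 : commute ga [~ ga, al] by apply/commute_sym/kerC => //; apply: Hga.
have c2 : commute al [~ ga, al] by apply/commute_sym/kerC.
have := expMg_Rmul p c1 c2.
rewrite -conjg_mulR -conjXg.
have -> : (al ^+ p) ^ be = al ^+ p by apply/conjg_fixP/commgP/kerC => //; apply: Kp.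
have -> : [~ ga, al] ^+ 'C(p, 2) = 1.
  rewrite bin2odd // expgM -commgX //.
  have -> : [~ ga, al ^+ p] = 1.
    by apply/eqP/commgP/commute_sym/kerC; [apply: Kp | apply: Hga].
  by rewrite expg1n.
rewrite mulg1 => /(congr1 (mulg (al ^+ p)^-1)); rewrite mulVg mulKg => E.
by rewrite -E.
Qed.


Lemma norm_sub (gT : finGroupType) (G : {group gT}) z : G :^ z \subset G -> z \in 'N(G).
Proof. by move=> sG; apply/normP/eqP; rewrite eqEcard sG cardJg leqnn. Qed.

Lemma count : (#|<<[set [~ al, ga]; [~ be, ga]]>>| <= p)%N -> False.
Proof.
move=> HM.
set d := [~ al, ga]; set e := [~ be, ga].
have Hd : d \in 'ker f := psi_ker Hal.
have He : e \in 'ker f := psi_ker Hbe.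
set M := <<[set d; e]>>%G.
have MC : M \subset 'C(K).
  rewrite gen_subG; apply/subsetP => z /set2P [] -> ; apply/centP => u Hu; exact: kerC.
have KCM : K \subset 'C(M) by rewrite centsC.
set N := (<[ga]> <*> M)%G.
have gaN : ga \in N by apply: (subsetP (joing_subl _ _)); apply: cycle_id.
have MN : M \subset N by apply: joing_subr.
have Mga : M \subset 'C(<[ga]>).
  by rewrite centsC; apply: subset_trans KCM; rewrite cycle_subG Hga.
have cardN : (#|N| <= p * p)%N.
  rewrite /N /= cent_joinEr //.
  have := mul_cardG <[ga]> M.
  have t_gt0 : (0 < #|<[ga]> :&: M|)%N by apply: (cardG_gt0 (<[ga]> :&: M)%G).
  move=> E; apply: leq_trans (leq_pmulr _ t_gt0) _; rewrite -E.
  apply: leq_mul => //; apply: dvdn_leq; first exact: prime_gt0.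
  by rewrite order_dvdn ga_p.
have nN z : z \in K -> [~ ga, z] \in M -> z \in 'N(N).
  move=> Hz Hgz; apply: norm_sub; rewrite /N /= conjYg -cycleJ.
  have -> : M :^ z = M.
    by apply/normP; apply: (subsetP (cent_sub M)); apply: (subsetP KCM).
  by rewrite join_subG MN andbT cycle_subG conjg_mulR groupM // (subsetP MN).
set L := <<[set al; be]>>%G.
have LN : L \subset 'N(N).
  rewrite gen_subG; apply/subsetP => z /set2P [] ->; apply: nN => //;
  by rewrite -invg_comm groupV mem_gen // !inE eqxx ?orbT.
have abLN : abelian (L / N).
  have sN : [set al; be] \subset 'N(N) by apply: subset_trans (sub_gen _) LN.
  rewrite quotient_gen // abelian_gen.
  have alN : al \in 'N(N) by apply: (subsetP sN); rewrite !inE eqxx.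
  have beN : be \in 'N(N) by apply: (subsetP sN); rewrite !inE eqxx ?orbT.
  have cab : commute (coset N al) (coset N be).
    by apply/commgP; rewrite -morphR //= coset_id.
  apply/centsP => X /morphimP [x Nx Sx ->] Y /morphimP [y Ny Sy ->].
  move: Sx Sy; rewrite !inE => /orP [] /eqP -> /orP [] /eqP -> //.
have L1N := der1_min LN abLN.
have alL : al \in L by rewrite mem_gen // !inE eqxx.
have beL : be \in L by rewrite mem_gen // !inE eqxx ?orbT.
have dec u : u \in K -> exists2 l, l \in L & exists2 k, k \in 'ker f & u = l * k.
  move=> Hu; have [c [k [Hk Eu]]] := decomp Hu.
  by exists (al ^+ GLval (f u) i0 i1 * be ^+ GLval (f u) i1 i2 * ga ^+ c);
    [rewrite !groupM ?groupX ?groupR | exists k].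
have LK : L \subset K by rewrite gen_subG; apply/subsetP => z /set2P [] ->.
have K1L : K^`(1) \subset L^`(1).
  rewrite derg1 /commutator gen_subG; apply/subsetP => z /imset2P [u v Hu Hv ->].
  have [l Hl [k Hk ->]] := dec u Hu; have [l' Hl' [k' Hk' ->]] := dec v Hv.
  have HlK := subsetP LK _ Hl; have Hl'K := subsetP LK _ Hl'.
  have HkK := dom_ker Hk; have Hk'K := dom_ker Hk'.
  rewrite commMgJ (_ : [~ k, l' * k'] = 1); last by apply/eqP/commgP/kerC; rewrite ?groupM.
  rewrite mulg1 (conjg_fixP _); last by apply/commgP/commute_sym/kerC; rewrite ?groupR ?groupM.
  rewrite commgMJ (_ : [~ l, k'] = 1); last by apply/eqP/commgP/commute_sym/kerC.
  rewrite mul1g (conjg_fixP _); last by apply/commgP/commute_sym/kerC; rewrite ?groupR.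
  by apply: mem_commg.
have kerK1 : 'ker f \subset K^`(1) by apply: subset_trans hker (subsetIr _ _).
have properK : 'ker f \proper K^`(1).
  rewrite properE kerK1 /=; apply/subsetPn; exists ga; first by rewrite derg1 mem_commg.
  apply/negP => /mker; rewrite fga -ZE1 => /ZE_inj [_ _ /eqP]; rewrite oner_eq0.
  done.
have lt := proper_card properK.
have H : (#|K^`(1)| <= p * p)%N.
  by apply: leq_trans (subset_leq_card (subset_trans K1L L1N)) cardN.
by have := leq_trans lt (leq_trans H hbig); rewrite ltnn.
Qed.


Lemma Zp_coprime (a : 'Z_p) : (a != 0)%R -> coprime p a.
Proof.
move=> nz; rewrite prime_coprime //; apply/negP => /dvdn_leq.
have a_gt0 : (0 < a)%N.
  by rewrite lt0n; apply: contra nz => /eqP a0; apply/eqP/val_inj.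
have a_lt : (a < p)%N by have := ltn_ord a; rewrite [in X in (_ < X)%N -> _]Zp_cast // p_gt1.
by move/(_ a_gt0); lia.
Qed.

Lemma Zp_unit (a : 'Z_p) : (a != 0)%R -> (a \is a GRing.unit)%R.
Proof. by move=> nz; rewrite -(natr_Zp a) unitZpE ?p_gt1 // Zp_coprime. Qed.

Lemma ord1 (g : rT) n : g ^+ n = 1 -> g ^+ p = 1 -> coprime p n -> g = 1.
Proof.
move=> gn gp cop; apply/eqP; rewrite -order_eq1.
have : (#[g] %| gcdn p n)%N by rewrite dvdn_gcd !order_dvdn gn gp eqxx.
by move: cop; rewrite /coprime => /eqP ->; rewrite dvdn1.
Qed.

Lemma noncentral x' y' : x' \in K -> y' \in K -> commute x' y' ->
  ((GLval (f x') i0 i1 != 0) || (GLval (f x') i1 i2 != 0))%R ->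
  cyclic <<[set f x'; f y']>>.
Proof.
move=> Hx Hy cxy nc.
set x1 := GLval (f x') i0 i1; set x2 := GLval (f x') i1 i2; set x3 := GLval (f x') i0 i2.
set y1 := GLval (f y') i0 i1; set y2 := GLval (f y') i1 i2; set y3 := GLval (f y') i0 i2.
have Ex : f x' = ZE x1 x2 x3 := heis_ZE (fheis Hx).
have Ey : f y' = ZE y1 y2 y3 := heis_ZE (fheis Hy).
have cf : commute (f x') (f y') by rewrite /commute -!morphM // cxy.
rewrite Ex Ey in cf; move/ZE_commute: cf => Ecf.
have [kk Hk1 Hk2] : exists2 kk : 'Z_p, y1 = (kk * x1)%R & y2 = (kk * x2)%R.
  case/orP: nc => /Zp_unit ux.
    exists (y1 / x1)%R; first by rewrite divrK.
    by rewrite -[y2](mulKr ux) Ecf; ring.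
  exists (y2 / x2)%R; last by rewrite divrK.
  by rewrite -[y1](mulKr ux) [(x2 * y1)%R]mulrC -Ecf; ring.
set n := nat_of_ord kk.
set s := (x3 * kk + x1 * x2 * ('C(n, 2))%:R)%R.
set l := (y3 - s)%R.
have Ey' : f y' = f x' ^+ n * (ZE 0 0 l)%R.
  rewrite Ey Ex ZE_exp ZE_mul /l /s Hk1 Hk2 /n natr_Zp; congr ZE; ring.
case: (eqVneq l 0%R) => [l0 | lnz].
  apply: cyclicS (cycle_cyclic (f x')).
  rewrite gen_subG; apply/subsetP => z /set2P [] ->; first exact: cycle_id.
  by rewrite Ey' l0 ZE1 mulg1 mem_cycle.
exfalso; apply: count.
have Hgl : f (ga ^+ l) = (ZE 0 0 l)%R.
  by rewrite morphX ?Hga // fga ZE_exp natr_Zp; congr ZE; ring.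
pose k := (x' ^+ n * ga ^+ l)^-1 * y'.
have Hk : k \in 'ker f.
  apply: in_ker; first by rewrite groupM ?groupV ?groupM ?groupX ?Hga.
  by rewrite morphM ?groupV ?groupM ?groupX ?Hga // morphV ?groupM ?groupX ?Hga //
    morphM ?groupX ?Hga // morphX // Hgl -Ey' mulVg.
have Ey'' : y' = x' ^+ n * ga ^+ l * k by rewrite mulKVg.
have HkK := dom_ker Hk.
have c1 : [~ x', ga ^+ l] = 1.
  have -> : ga ^+ l = (x' ^+ n)^-1 * y' * k^-1.
    by rewrite /k invMg invgK mulgA mulgK mulgA mulVg mul1g.
  apply/eqP/commgP/commuteM; last exact/commuteV/commute_sym/kerC.
  by apply/commuteM => //; apply/commuteV/commuteX.
have g1 : [~ x', ga] = 1.
  apply: (@ord1 _ l).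
  - by rewrite -commgX //; apply/commute_sym/psi_C => //; apply: Hga.
  - by rewrite -psiX // psi_ker1 // Kp.
  - exact: Zp_coprime.
move: g1; rewrite psi_decomp // -/x1 -/x2.
set d := [~ al, ga]; set e := [~ be, ga] => de1.
have dp : d ^+ p = 1 by rewrite -psiX // psi_ker1 // Kp.
have ep : e ^+ p = 1 by rewrite -psiX // psi_ker1 // Kp.
have ordp (g : rT) : g ^+ p = 1 -> (#|<[g]>| <= p)%N.
  by move=> gp; apply: dvdn_leq; [exact: prime_gt0 | rewrite order_dvdn gp].
case: (eqVneq x1 0%R) => [x10 | x1nz].
  have x2nz : (x2 != 0)%R by move: nc; rewrite -/x1 -/x2 x10 eqxx.
  move: de1; rewrite x10 /= expg0 mul1g => e1.
  have -> : e = 1 by apply: (@ord1 _ x2) => //; exact: Zp_coprime.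
  apply: (leq_trans _ (ordp d dp)); apply: subset_leq_card.
  by rewrite gen_subG; apply/subsetP => z /set2P [] ->; rewrite ?cycle_id ?group1.
have cd : coprime #[d] x1.
  apply: coprime_dvdl (Zp_coprime x1nz).
  by rewrite order_dvdn dp.
have dx : d ^+ x1 = (e ^+ x2)^-1 by apply/eqP; rewrite eq_mulgV1 invgK de1.
have de : d \in <[e]>.
  have : generator <[d]> (d ^+ x1) by rewrite generator_coprime.
  rewrite /generator => /eqP Ed.
  by rewrite -cycle_subG Ed cycle_subG dx groupV mem_cycle.
apply: (leq_trans _ (ordp e ep)); apply: subset_leq_card.
by rewrite gen_subG; apply/subsetP => z /set2P [] ->; rewrite ?cycle_id.
Qed.

End Main.
Section Fin.
Local Open Scope group_scope.

Lemma card_dom (aT bT : finGroupType) (D : {group aT}) (g : {morphism D >-> bT}) :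
  #|D| = (#|'ker g| * #|g @* D|)%N.
Proof.
have sK : 'ker g \subset D by apply/subsetP => z; exact: dom_ker.
by rewrite card_morphim setIid -(LagrangeI D ('ker g)) (setIidPr sK).
Qed.

Lemma k1case (m : nat) (rT : finGroupType) (K : {group rT})
    (f : {morphism K >-> {'GL_3['Z_m]}}) (hp : prime m) (hodd : odd m)
    (fK : f @* K = heis m) (hker : 'ker f \subset 'Z(K) :&: K^`(1))
    (Hmax : forall (sT : finGroupType) (L : {group sT}) (g : {morphism L >-> {'GL_3['Z_m]}}),
        stem_ext (heis m) g -> (#|L| <= #|K|)%N) :
  forall x y, x \in heis m -> y \in heis m -> (epg_adj x y <-> dcg_adj f x y).
Proof.
have m_gt1 : (1 < m)%N := prime_gt1 hp.
have hbig : (m * m <= #|'ker f|)%N.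
  have st := g0_stem m_gt1 hodd.
  have := Hmax _ _ _ st.
  move/andP: (st) => [/eqP Eg _].
  have cf : #|K| = (#|'ker f| * #|heis m|)%N by rewrite -fK; exact: card_dom.
  have cg : #|[set: T5 m]| = (#|'ker (g0 m)| * #|heis m|)%N by rewrite -Eg; exact: card_dom.
  rewrite cf cg.
  have h_gt0 : (0 < #|heis m|)%N by apply/card_gt0P; exists (ZE 0 0 0)%R; apply: ZE_heis.
  rewrite leq_pmul2r // => H; apply: leq_trans H.
  exact: card_ker_g0.
have hZ : 'ker f \subset 'Z(K) by apply: subset_trans hker (subsetIl _ _).
have [al Hal fal] := lift fK (ZE_heis 1%R 0%R 0%R).
have [be Hbe fbe] := lift fK (ZE_heis 0%R 1%R 0%R).
move=> x y Hx Hy; split.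
  case/andP => nxy /cyclicP [g Eg]; split => //.
  have : g \in f @* K.
    have : <<[set x; y]>> \subset f @* K.
      move: Hx Hy; rewrite -fK => Hx Hy.
      by rewrite gen_subG; apply/subsetP => z /set2P [] ->; [exact: Hx | exact: Hy].
    by move/subsetP; apply; rewrite Eg cycle_id.
  case/morphimP => g' Hg' _ Eg'.
  have : x \in <[g]> by rewrite -Eg mem_gen // !inE eqxx.
  have : y \in <[g]> by rewrite -Eg mem_gen // !inE eqxx ?orbT.
  case/cycleP => j ->; case/cycleP => i ->.
  exists (g' ^+ i), (g' ^+ j); split; rewrite ?groupX ?morphX // ?Eg' //.
  exact: commuteX2.
case=> nxy [x' [y' [Hx' Hy' fx fy cxy]]].
rewrite /epg_adj nxy /= -fx -fy.
have NC := noncentral hp hodd fK hker hbig Hal Hbe.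
case nc : ((GLval (f x') i0 i1 != 0) || (GLval (f x') i1 i2 != 0))%R.
  by move: NC => /(_ fal fbe x' y' Hx' Hy' cxy nc).
case nc' : ((GLval (f y') i0 i1 != 0) || (GLval (f y') i1 i2 != 0))%R.
  have -> : [set f x'; f y'] = [set f y'; f x'] by rewrite setUC.
  by move: NC => /(_ fal fbe y' x' Hy' Hx' (commute_sym cxy) nc').
apply: cyclicS (cycle_cyclic (ZE 0 0 1)%R).
have Hc u : u \in K -> ((GLval (f u) i0 i1 != 0) || (GLval (f u) i1 i2 != 0))%R = false ->
    f u \in <[(ZE 0 0 1)%R]>.
  move=> Hu /negbT; rewrite negb_or !negbK => /andP [/eqP a0 /eqP b0].
  rewrite (heis_ZE (fheis fK Hu)) a0 b0; apply/cycleP.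
  exists (GLval (f u) i0 i2); rewrite ZE_exp natr_Zp; congr ZE; ring.
by rewrite gen_subG; apply/subsetP => z /set2P [] ->; apply: Hc.
Qed.

End Fin.

Unset Implicit Arguments.
Local Open Scope group_scope.

Theorem theorem5p4 (p k : nat) (hp : prime p) (hodd : odd p) (hk : (1 <= k)%N)
    (rT : finGroupType) (K : {group rT})
    (f : {morphism K >-> {'GL_3['Z_(p ^ k)]}}) :
  schur_cover (heis (p ^ k)) f ->
  ((forall x y, x \in heis (p ^ k) -> y \in heis (p ^ k) ->
      (epg_adj x y <-> dcg_adj f x y)) <-> k = 1%N).
Proof.
move=> [/andP [/eqP fK hker] Hmax].
have hZ : 'ker f \subset 'Z(K) by apply: subset_trans hker (subsetIl _ _).
split.
  move=> H; apply/eqP; rewrite eqn_leq hk andbT leqNgt; apply/negP => k2.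
  have [x [y [Hx Hy nE Dxy]]] := counter hp k2 fK hZ.
  by move/negP: nE; apply; apply/(H x y Hx Hy).
move=> k1; apply: k1case => //; by rewrite k1 expn1.
Qed.
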